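(* Let $G=(V,D,B)$ be a mixed graph. The Jacobian $J_G(0,I)$ of the covariance parametrization $\phi_G$, evaluated at $\Lambda=0$ and $\Omega=I$, has full column rank $|V|+|B|+|D|$ if and only if $G$ is simple.
   Context: A mixed graph with finite vertex set $V$ is a triple $G=(V,D,B)$ with $D$ a set of ordered pairs $(i,j)$, $i\ne j$ (directed edges $i\to j$) and $B$ a set of unordered pairs $\{i,j\}$, $i\ne j$ (bidirected edges); in general a pair of nodes may be joined by several edges (e.g. both $i\to j$ and $j\to i$, or $i\to j$ and $i\leftrightarrow j$). $G$ is simple if any two distinct nodes are joined by at most one edge of any type. $\mathbb{R}^D_{\mathrm{reg}}$ is the set of real $V\times V$ matrices $\Lambda$ with $\lambda_{ij}=0$ for $(i,j)\notin D$ and $I-\Lambda$ invertible; $\mathit{PD}(B)$ is the set of positive definite symmetric matrices $\Omega$ with $\omega_{ij}=0$ for $i\ne j$, $\{i,j\}\notin B$. The covariance parametrization is $\phi_G(\Lambda,\Omega)=(I-\Lambda)^{-T}\Omega(I-\Lambda)^{-1}$ on $\mathbb{R}^D_{\mathrm{reg}}\times\mathit{PD}(B)$, and $J_G$ is its Jacobian with respect to the $|D|+|V|+|B|$ free parameters $\lambda_{kl}$ ($(k,l)\in D$), $\omega_{ii}$ ($i\in V$), $\omega_{ij}$ ($\{i,j\}\in B$). *)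

(* Defs.v *)
From HB Require Import structures.
From mathcomp Require Import all_boot all_order all_algebra.
From mathcomp Require Import reals topology normedtype derive.
Import numFieldNormedType.Exports.
Set Implicit Arguments. Unset Strict Implicit. Unset Printing Implicit Defensive.
Import Order.TTheory GRing.Theory Num.Theory.
Local Open Scope ring_scope.

(* Mixed graph on V = 'I_n: D a set of ordered pairs (directed edges k -> l),
   B a set of 2-element subsets of V (bidirected edges). *)

Section MixedGraph.
Variable R : realType.
Variable n : nat.
Variable D : {set 'I_n * 'I_n}.
Variable B : {set {set 'I_n}}.

Definition simple : Prop :=
  forall i j : 'I_n, i != j ->
    (((i, j) \in D) + ((j, i) \in D) + ([set i; j] \in B) <= 1)%N.

(* Index type of the free parameters: lambda_kl ((k,l) in D), omega_ii (i in V),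
   omega_ij ({i,j} in B). *)
Definition DEdge := {x : 'I_n * 'I_n | x \in D}.
Definition BEdge := {e : {set 'I_n} | e \in B}.
Definition Par := (DEdge + 'I_n + BEdge)%type.

Definition bmx (e : {set 'I_n}) : 'M[R]_n :=
  \matrix_(i, j) (if (i != j) && (e == [set i; j]) then 1 else 0).

Definition lam_of (th : Par -> R) : 'M[R]_n :=
  \sum_(p : DEdge) th (inl (inl p)) *: delta_mx (val p).1 (val p).2.
Definition om_of (th : Par -> R) : 'M[R]_n :=
  \sum_(i : 'I_n) th (inl (inr i)) *: delta_mx i i
  + \sum_(e : BEdge) th (inr e) *: bmx (val e).

Definition phi (L O : 'M[R]_n) : 'M[R]_n :=
  (invmx (1%:M - L))^T *m O *m invmx (1%:M - L).
Definition phiG (th : Par -> R) : 'M[R]_n := phi (lam_of th) (om_of th).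

Definition theta0 : Par -> R :=
  fun p => match p with inl (inr _) => 1 | _ => 0 end.
Definition shift (th : Par -> R) (c : Par) (t : R) : Par -> R :=
  fun p => th p + (if p == c then t else 0).

(* Output coordinates sigma_ij, i <= j, of the symmetric matrix phi. *)
Definition SymIdx := {p : 'I_n * 'I_n | (p.1 <= p.2)%N}.

Definition JacG : 'M[R]_(#|{: SymIdx}|, #|{: Par}|) :=
  \matrix_(r < #|{: SymIdx}|, c < #|{: Par}|)
    let ij := val (enum_val r) in
    derive1 (fun t : R => phiG (shift theta0 (enum_val c) t) ij.1 ij.2) 0.

End MixedGraph.

(* Main.v *)
Require Import Defs.
From HB Require Import structures.
From mathcomp Require Import all_boot all_order all_algebra.
From mathcomp Require Import reals topology normedtype derive.
From mathcomp Require Import ring.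
Import numFieldNormedType.Exports.
Import Order.TTheory GRing.Theory Num.Theory.
Local Open Scope ring_scope.
Set Implicit Arguments. Unset Strict Implicit. Unset Printing Implicit Defensive.

Lemma dpoly (R : realType) (f : R -> R) (a b c : R) :
  (forall t, f t = a + t * b + t ^+ 2 * c) -> derive1 f 0 = b.
Proof.
move=> hf.
have -> : f = (fun t : R => a + t * b + t ^+ 2 * c).
  by apply: boolp.funext => t; exact: hf.
rewrite derive1E.
have H : is_derive (0:R) 1 (fun t : R => a + t * b + t ^+ 2 * c) b.
  apply: is_derive_eq.
  by rewrite !(scaler0, add0r, addr0, scale0r) /GRing.scale /= mulr1.
by rewrite derive_val.
Qed.

Definition Lc (R : realType) n (D : {set 'I_n * 'I_n}) (B : {set {set 'I_n}})
  (c : Par D B) : 'M[R]_n :=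
  match c with inl (inl p) => delta_mx (val p).1 (val p).2 | _ => 0 end.
Definition Oc (R : realType) n (D : {set 'I_n * 'I_n}) (B : {set {set 'I_n}})
  (c : Par D B) : 'M[R]_n :=
  match c with inl (inl p) => 0 | inl (inr i) => delta_mx i i | inr e => bmx R (val e) end.

Lemma sum_if_pred1 (R : realType) n (I : finType) (F : I -> 'M[R]_n) (P : pred I) (t : R) :
  \sum_i (if P i then t else 0) *: F i = \sum_(i | P i) t *: F i.
Proof. by rewrite [RHS]big_mkcond; apply: eq_bigr => i _; case: (P i); rewrite ?scale0r. Qed.

Lemma lam_shift (R : realType) n (D : {set 'I_n * 'I_n}) (B : {set {set 'I_n}})
  (c : Par D B) (t : R) : lam_of (Defs.shift (@theta0 R n D B) c t) = t *: Lc R c.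
Proof.
rewrite /lam_of /Defs.shift /theta0.
under eq_bigr do rewrite add0r.
rewrite sum_if_pred1.
case: c => [[p0|i0]|e0] /=.
- by rewrite (big_pred1 p0).
- by rewrite big_pred0 ?scaler0.
- by rewrite big_pred0 ?scaler0.
Qed.

Lemma om_shift (R : realType) n (D : {set 'I_n * 'I_n}) (B : {set {set 'I_n}})
  (c : Par D B) (t : R) : om_of (Defs.shift (@theta0 R n D B) c t) = 1%:M + t *: Oc R c.
Proof.
rewrite /om_of /Defs.shift /theta0.
under eq_bigr do rewrite scalerDl scale1r.
rewrite big_split /= -mx1_sum_delta -addrA; congr (_ + _).
under [X in _ + X]eq_bigr do rewrite add0r.
rewrite !sum_if_pred1.
case: c => [[p0|i0]|e0] /=.
- by rewrite !big_pred0 ?scaler0 ?addr0.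
- by rewrite (big_pred1 i0) // big_pred0 ?addr0.
- by rewrite (big_pred1 e0) // big_pred0 ?add0r.
Qed.

Definition Sm (R : realType) n (D : {set 'I_n * 'I_n}) (B : {set {set 'I_n}})
  (c : Par D B) : 'M[R]_n := Lc R c + (Lc R c)^T + Oc R c.
Definition Qm (R : realType) n (D : {set 'I_n * 'I_n}) (B : {set {set 'I_n}})
  (c : Par D B) : 'M[R]_n := (Lc R c)^T *m Lc R c.

Lemma inv_nil (R : realType) n (A : 'M[R]_n) (t : R) :
  A *m A = 0 -> invmx (1%:M - t *: A) = 1%:M + t *: A.
Proof.
move=> hA.
have h : (1%:M - t *: A) *m (1%:M + t *: A) = 1%:M.
  rewrite mulmxBl !mulmxDr !mul1mx mulmx1 -!scalemxAl -!scalemxAr hA !scaler0.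
  by rewrite addr0 addrK.
case/mulmx1_unit: (h) => u _.
by rewrite -[RHS](mulKmx u) h mulmx1.
Qed.

Lemma phi_shift (R : realType) n (D : {set 'I_n * 'I_n}) (B : {set {set 'I_n}})
  (HD : forall x, x \in D -> x.1 != x.2) (c : Par D B) (t : R) :
  phiG (Defs.shift (@theta0 R n D B) c t) = 1%:M + t *: Sm R c + t ^+ 2 *: Qm R c.
Proof.
rewrite /phiG /phi lam_shift om_shift /Sm /Qm.
case: c => [[p|i]|e] /=.
- have hkl := HD _ (valP p).
  rewrite inv_nil; last by rewrite mul_delta_mx_cond eq_sym (negbTE hkl) mulr0n.
  set E := delta_mx _ _.
  have -> : (1%:M + t *: E)^T = 1%:M + t *: E^T.
    by apply/matrixP => a b; rewrite !mxE eq_sym.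
  rewrite scaler0 addr0 mulmx1.
  rewrite mulmxDl !mulmxDr !mul1mx mulmx1 -!scalemxAl -!scalemxAr scalerA -expr2.
  rewrite !scalerDr scaler0 addr0.
  apply/matrixP => a b; rewrite !mxE.
  ring.
- rewrite scaler0 subr0 invmx1 trmx1 mul1mx mulmx1 trmx0 mulmx0 !scaler0 !add0r addr0.
  by [].
- rewrite scaler0 subr0 invmx1 trmx1 mul1mx mulmx1 trmx0 mulmx0 !scaler0 !add0r addr0.
  by [].
Qed.

Lemma col_val (R : realType) n (D : {set 'I_n * 'I_n}) (B : {set {set 'I_n}})
  (HD : forall x, x \in D -> x.1 != x.2) (c : Par D B) (a b : 'I_n) :
  derive1 (fun t : R => phiG (Defs.shift (@theta0 R n D B) c t) a b) 0 = Sm R c a b.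
Proof.
apply: (dpoly (a := (1%:M : 'M[R]_n) a b) (c := Qm R c a b)) => t.
by rewrite phi_shift // !mxE.
Qed.

Definition upair n (a b k l : 'I_n) : bool :=
  ((a == k) && (b == l)) || ((a == l) && (b == k)).

Definition Sb n (D : {set 'I_n * 'I_n}) (B : {set {set 'I_n}}) (c : Par D B) (a b : 'I_n) : bool :=
  match c with
  | inl (inl p) => upair a b (val p).1 (val p).2
  | inl (inr i) => (a == i) && (b == i)
  | inr e => (a != b) && (val e == [set a; b])
  end.

Lemma natr_or (R : realType) (x y : bool) : ~~ (x && y) -> x%:R + y%:R = (x || y)%:R :> R.
Proof. by case: x; case: y; rewrite //= ?addr0 ?add0r. Qed.

Lemma Sm_Sb (R : realType) n (D : {set 'I_n * 'I_n}) (B : {set {set 'I_n}})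
  (HD : forall x, x \in D -> x.1 != x.2) (c : Par D B) (a b : 'I_n) :
  Sm R c a b = (Sb c a b)%:R.
Proof.
rewrite /Sm /Sb; case: c => [[[[k l] hp]|i]|e] /=.
- have /= hkl := HD _ hp; rewrite /upair.
  rewrite addr0 !mxE [(b == k) && _]andbC natr_or //.
  apply/negP => /andP[/andP[/eqP e1 _] /andP[/eqP e2 _]].
  by rewrite -e1 -e2 eqxx in hkl.
- by rewrite trmx0 !add0r mxE.
- by rewrite trmx0 !add0r mxE; case: ifP.
Qed.

Lemma set2_upair n (k l a b : 'I_n) : k != l ->
  ((a != b) && ([set k; l] == [set a; b])) = upair a b k l.
Proof.
move=> hkl; rewrite /upair; apply/idP/idP.
- case/andP => hab /eqP hs.
  have hk : k \in [set a; b] by rewrite -hs !inE eqxx.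
  have hl : l \in [set a; b] by rewrite -hs !inE eqxx orbT.
  rewrite !inE in hk hl.
  case/orP: hk => /eqP ek; case/orP: hl => /eqP el; subst;
    rewrite ?eqxx ?andbT ?orbT //; by rewrite eqxx in hkl.
- case/orP => /andP[/eqP -> /eqP ->]; first by rewrite hkl eqxx.
  by rewrite eq_sym hkl setUC eqxx.
Qed.

Lemma Sb_sym n (D : {set 'I_n * 'I_n}) (B : {set {set 'I_n}}) (c : Par D B) (a b : 'I_n) :
  Sb c a b = Sb c b a.
Proof.
case: c => [[p|i]|e] /=.
- by rewrite /upair orbC; congr (_ || _); apply: andbC.
- exact: andbC.
- by rewrite eq_sym setUC.
Qed.

Lemma key n (D : {set 'I_n * 'I_n}) (B : {set {set 'I_n}})
  (HD : forall x, x \in D -> x.1 != x.2)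
  (HB : forall e, e \in B -> #|e| = 2%N) (hs : simple D B) (p0 : Par D B) :
  exists a b : 'I_n, forall p, Sb p a b = (p == p0).
Proof.
case: p0 => [[[[k l] hq0]|i0]|e0].
- have /= hkl := HD _ hq0.
  exists k, l => -[[[[x y] hq]|i]|e] /=.
  + apply/idP/eqP.
    * case/orP => /andP[/eqP ex /eqP ey]; subst.
        by rewrite (bool_irrelevance hq hq0).
      have := hs _ _ hkl; by rewrite hq0 hq.
    * case => -> ->; by rewrite /upair !eqxx.
  + rewrite [RHS](_ : _ = false) //.
    apply/negP => /andP[/eqP <- /eqP e2]; by rewrite e2 eqxx in hkl.
  + rewrite [RHS](_ : _ = false) //.
    apply/negP => /andP[_ /eqP he].
    have := hs _ _ hkl; by rewrite hq0 -he (valP e) addnC.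
- exists i0, i0 => -[[[[x y] hq]|i]|e] /=.
  + rewrite [RHS](_ : _ = false) //.
    apply/negP => /orP[] /andP[/eqP e1 /eqP e2]; have /= := HD _ hq;
      by rewrite -e1 -e2 eqxx.
  + rewrite [RHS](_ : _ = (i == i0)) //.
    by rewrite andbb eq_sym.
  + rewrite [RHS](_ : _ = false) //.
    by rewrite eqxx.
- have /eqP/cards2P [x [y [hxy he]]] := HB _ (valP e0).
  have hB : [set x; y] \in B by rewrite -he (valP e0).
  exists x, y => -[[[[u v] hq]|i]|e] /=.
  + rewrite [RHS](_ : _ = false) //.
    apply/negP => /orP[] /andP[/eqP e1 /eqP e2]; subst;
      have := hs _ _ hxy;
      by rewrite hB addn1 ltnS leqn0 addn_eq0 !eqb0 hq ?andbF.
  + rewrite [RHS](_ : _ = false) //.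
    apply/negP => /andP[/eqP e1 /eqP e2]; by rewrite e1 e2 eqxx in hxy.
  + apply/idP/eqP.
    * case/andP => _ /eqP h; congr inr; apply: val_inj; by rewrite /= h he.
    * case => ->; by rewrite hxy he eqxx.
Qed.

Lemma rowfreeP (R : fieldType) m k (A : 'M[R]_(m, k)) :
  row_free A <-> (forall v : 'rV_m, v *m A = 0 -> v = 0).
Proof.
split.
- move=> rf v vA.
  have : (v <= kermx A)%MS by apply/sub_kermxP.
  by move: rf; rewrite -kermx_eq0 => /eqP ->; rewrite submx0 => /eqP.
- move=> H; rewrite -kermx_eq0 -submx0; apply/row_subP => i.
  rewrite submx0; apply/eqP; apply: H.
  by rewrite -row_mul mulmx_ker row0.
Qed.

Lemma Jentry (R : realType) n (D : {set 'I_n * 'I_n}) (B : {set {set 'I_n}})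
  (HD : forall x, x \in D -> x.1 != x.2) r c :
  JacG R D B r c = (Sb (enum_val c) (val (enum_val r)).1 (val (enum_val r)).2)%:R.
Proof. by rewrite /JacG mxE col_val // Sm_Sb. Qed.

Lemma card_par n (D : {set 'I_n * 'I_n}) (B : {set {set 'I_n}}) :
  #|{: Par D B}| = (#|D| + n + #|B|)%N.
Proof.
rewrite !card_sum card_ord /DEdge /BEdge !card_sig.
by congr (_ + _ + _)%N; apply: eq_card.
Qed.

Theorem lemma2 (R : realType) (n : nat) (D : {set 'I_n * 'I_n})
    (B : {set {set 'I_n}})
    (HD : forall x, x \in D -> x.1 != x.2)
    (HB : forall e, e \in B -> #|e| = 2%N) :
  \rank (JacG R D B) = (#|D| + n + #|B|)%N <-> simple D B.
Proof.
rewrite -card_par.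
have hJ := @Jentry R n D B HD.
move: hJ; set J := JacG R D B; clearbody J => hJ.
have -> : (\rank J = #|{: Par D B}|) <-> row_free J^T.
  by rewrite /row_free mxrank_tr; split => [->|/eqP].
rewrite rowfreeP; split.
- move=> hf i j hij; rewrite leqNgt; apply/negP => hgt.
  have [p1 [p2 [hne heq]]] : exists p1 p2 : Par D B,
      p1 != p2 /\ forall a b, Sb p1 a b = Sb p2 a b.
    move: hgt; case h1: ((i, j) \in D); case h2: ((j, i) \in D);
      case h3: ([set i; j] \in B) => //= _.
    + exists (inl (inl (exist _ (i, j) h1))), (inl (inl (exist _ (j, i) h2))).
      split; last by move=> a b /=; rewrite /upair orbC.
      apply/eqP => -[e1 e2]; by rewrite e1 eqxx in hij.
    + exists (inl (inl (exist _ (i, j) h1))), (inl (inl (exist _ (j, i) h2))).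
      split; last by move=> a b /=; rewrite /upair orbC.
      apply/eqP => -[e1 e2]; by rewrite e1 eqxx in hij.
    + exists (inl (inl (exist _ (i, j) h1))), (inr (exist _ [set i; j] h3)).
      split => // a b /=; by rewrite set2_upair.
    + exists (inl (inl (exist _ (j, i) h2))), (inr (exist _ [set i; j] h3)).
      split => // a b /=; by rewrite set2_upair // /upair orbC.
  pose v : 'rV[R]_#|{: Par D B}| := delta_mx 0 (enum_rank p1) - delta_mx 0 (enum_rank p2).
  have hv : v *m J^T = 0.
    rewrite /v mulmxBl -!rowE; apply/eqP; rewrite subr_eq0; apply/eqP/matrixP => z r.
    by rewrite !mxE !hJ !enum_rankK heq.
  move: (hf v hv) => /matrixP/(_ 0 (enum_rank p1)).
  rewrite !mxE !eqxx /= (inj_eq (@enum_rank_inj _)) (negbTE hne) subr0 => /eqP.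
  by rewrite oner_eq0.
- move=> hs v hv; apply/rowP => c0; rewrite mxE.
  have [a [b hab]] := key HD HB hs (enum_val c0).
  have [a' [b' [hle hab']]] : exists a' b' : 'I_n, (a' <= b')%N /\
      forall p, Sb p a' b' = (p == enum_val c0).
    case: (leqP a b) => h; [exists a, b | exists b, a]; split => //.
    + exact: ltnW.
    + by move=> p; rewrite Sb_sym; exact: hab.
  pose r0 := enum_rank (exist _ (a', b') hle : SymIdx n).
  move/matrixP: hv => /(_ 0 r0); rewrite !mxE (bigD1 c0) //= big1.
  + rewrite mxE hJ enum_rankK /= hab' eqxx mulr1 addr0 => ->; by [].
  + move=> c hc; rewrite mxE hJ enum_rankK /= hab' (inj_eq (@enum_val_inj _ _)).
    by rewrite (negbTE hc) mulr0.
Qed.
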